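(* Let $A^1,\dots,A^d\in\mathbb{C}^{D\times D}$ define an injective matrix product state tensor, let $o$ be an operator on $(\mathbb{C}^d)^{\otimes k}$ with matrix elements $o^{i_1\cdots i_k}_{j_1\cdots j_k}=\bra{i_1\cdots i_k}o\ket{j_1\cdots j_k}$, and let $\epsilon\in\mathbb{C}$. Suppose two families of matrices $B^{i_1\cdots i_{k-1}},\tilde B^{i_1\cdots i_{k-1}}\in\mathbb{C}^{D\times D}$ (indexed by $(i_1,\dots,i_{k-1})\in\{1,\dots,d\}^{k-1}$) both satisfy, for all $i_1,\dots,i_k$, $$\sum_{j_1,\dots,j_k}\Big(o^{i_1\cdots i_k}_{j_1\cdots j_k}-\epsilon\,\delta_{i_1j_1}\cdots\delta_{i_kj_k}\Big)A^{j_1}\cdots A^{j_k}=A^{i_1}C^{i_2\cdots i_k}-C^{i_1\cdots i_{k-1}}A^{i_k}$$ with $C=B$ and with $C=\tilde B$ respectively. Then there exists $\lambda\in\mathbb{C}$ such that $\tilde B^{i_1\cdots i_{k-1}}=B^{i_1\cdots i_{k-1}}+\lambda\,A^{i_1}\cdots A^{i_{k-1}}$ for all $i_1,\dots,i_{k-1}$.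
   Context: For $M\ge1$ define $\Gamma_M:\mathbb{C}^{D\times D}\to(\mathbb{C}^d)^{\otimes M}$, $\Gamma_M(X)=\sum_{i_1,\dots,i_M}\operatorname{Tr}(XA^{i_1}\cdots A^{i_M})\ket{i_1\cdots i_M}$. The tensor $A$ is injective if $\Gamma_M$ is injective for some $M$. *)

(* Defs.v *)
From HB Require Import structures.
From mathcomp Require Import all_boot all_order all_algebra.
From mathcomp Require Import reals.
From mathcomp.real_closed Require Import complex.
Set Implicit Arguments. Unset Strict Implicit. Unset Printing Implicit Defensive.
Import Order.TTheory GRing.Theory Num.Theory.
Local Open Scope ring_scope.

Section MPS.
Variables (F : fieldType) (d D : nat).

Definition mxprod (A : 'I_d -> 'M[F]_D) (s : seq 'I_d) : 'M[F]_D :=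
  foldr (fun i M => A i *m M) 1%:M s.

(* Gamma_M(X) = sum_{i_1..i_M} Tr(X A^{i_1}...A^{i_M}) |i_1...i_M>,
   represented by its coordinate function on basis vectors |i_1..i_M>. *)
Definition Gamma (A : 'I_d -> 'M[F]_D) (M : nat) (X : 'M[F]_D)
  : {ffun M.-tuple 'I_d -> F} :=
  [ffun i : M.-tuple 'I_d => \tr (X *m mxprod A i)].

Definition mps_injective (A : 'I_d -> 'M[F]_D) : Prop :=
  exists M : nat, (0 < M)%N /\ injective (Gamma A M).

Definition tfirst n (t : n.+1.-tuple 'I_d) : n.-tuple 'I_d :=
  [tuple tnth t (widen_ord (leqnSn n) j) | j < n].
Definition tlast n (t : n.+1.-tuple 'I_d) : n.-tuple 'I_d :=
  [tuple tnth t (lift ord0 j) | j < n].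

(* The equation of the statement, with k = n.+1 sites. o i j = <i|o|j>. *)
Definition solves_eq n (A : 'I_d -> 'M[F]_D)
  (o : n.+1.-tuple 'I_d -> n.+1.-tuple 'I_d -> F) (eps : F)
  (C : n.-tuple 'I_d -> 'M[F]_D) : Prop :=
  forall i : n.+1.-tuple 'I_d,
    \sum_(j : n.+1.-tuple 'I_d) (o i j - eps * (i == j)%:R) *: mxprod A j
    = A (tnth i ord0) *m C (tlast i) - C (tfirst i) *m A (tnth i ord_max).

End MPS.

(* Main.v *)
Require Import Defs.
From HB Require Import structures.
From mathcomp Require Import all_boot all_order all_algebra.
From mathcomp Require Import reals.
From mathcomp.real_closed Require Import complex.
Import Order.TTheory GRing.Theory Num.Theory.
Local Open Scope ring_scope.
Set Implicit Arguments. Unset Strict Implicit.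

Section Helpers.
Variables (F : fieldType) (d D : nat) (A : 'I_d -> 'M[F]_D).
Local Notation P := (mxprod A).

Lemma mxprod_cat s1 s2 : P (s1 ++ s2) = P s1 *m P s2.
Proof. by elim: s1 => [|a s IH] /=; rewrite ?mul1mx // IH mulmxA. Qed.

Lemma val_tlast n (t : n.+1.-tuple 'I_d) : val (tlast t) = behead t.
Proof.
have -> : tlast t = behead_tuple t.
  apply: eq_from_tnth => j; rewrite tnth_mktuple tnth_behead; congr tnth.
  by apply: val_inj; rewrite /= inordK // ltnS.
by [].
Qed.

Lemma val_tfirst n (t : n.+1.-tuple 'I_d) : val (tfirst t) = take n t.
Proof.
set x0 := tnth t ord0.
apply: (@eq_from_nth _ x0); first by rewrite size_tuple size_take size_tuple ltnSn.
move=> i; rewrite size_tuple => lt_in.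
rewrite nth_take //.
have -> : nth x0 (tfirst t) i = tnth (tfirst t) (Ordinal lt_in) by rewrite (tnth_nth x0).
by rewrite tnth_mktuple (tnth_nth x0).
Qed.

Definition injS L := forall X : 'M[F]_D,
  (forall s : seq 'I_d, size s = L -> \tr (X *m P s) = 0) -> X = 0.

Lemma injS_add a b : injS a -> injS b -> injS (a + b).
Proof.
move=> ia ib X H; apply: ib => v sv.
have PvX : P v *m X = 0.
  apply: ia => u su.
  rewrite (mxtrace_mulC (P v *m X)) mulmxA -mxprod_cat mxtrace_mulC.
  by rewrite H // size_cat su sv.
by rewrite mxtrace_mulC PvX mxtrace0.
Qed.

Lemma injS_mul M k : injS M -> injS (k.+1 * M).
Proof.
move=> iM; elim: k => [|k IH]; first by rewrite mul1n.
by rewrite mulSn addnC; apply: injS_add.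
Qed.

Lemma injS_of : mps_injective A -> exists2 M, (0 < M)%N & injS M.
Proof.
case=> M [M0 inj]; exists M => // X H; apply: inj.
apply/ffunP => t; rewrite !ffunE H ?size_tuple //.
by rewrite mul0mx mxtrace0.
Qed.

Lemma dotE (u : 'rV[F]_(D * D)) (Y : 'M[F]_D) :
  \sum_j u 0 j * mxvec Y 0 j = \tr ((vec_mx u)^T *m Y).
Proof.
rewrite -{1}(vec_mxK u); set X := vec_mx u.
rewrite (reindex _ (curry_mxvec_bij _ _)) /=.
transitivity (\sum_i \sum_j X i j * Y i j).
  by rewrite pair_big /=; apply: eq_bigr => [[i j]] _ /=; rewrite !mxvecE.
rewrite /mxtrace exchange_big /=; apply: eq_bigr => i _; rewrite mxE.
by apply: eq_bigr => j _; rewrite !mxE.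
Qed.


Section Span.
Variable L : nat.
Hypothesis iL : injS L.
Local Notation W := (L.-tuple 'I_d).
Definition wd (k : 'I_#|{:W}|) : seq 'I_d := val (enum_val k : W).

Lemma size_wd k : size (wd k) = L.
Proof. exact: size_tuple. Qed.

Lemma span_all (Y : 'M[F]_D) :
  exists c : 'I_#|{:W}| -> F, Y = \sum_k c k *: P (wd k).
Proof.
pose S : 'M[F]_(#|{:W}|, D * D) := \matrix_(k, j) mxvec (P (wd k)) 0 j.
have rfS : row_full S.
  apply: contraT => nfull.
  have rkK : (0 < \rank (kermx S^T))%N.
    by rewrite mxrank_ker mxrank_tr subn_gt0 ltn_neqAle nfull rank_leq_col.
  have [r nz] : exists r, row r (kermx S^T) != 0.
    case: (pickP (fun r => row r (kermx S^T) != 0)) => [r Hr|all0]; first by exists r.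
    suff K0 : kermx S^T = 0 by move: rkK; rewrite K0 mxrank0.
    by apply/row_matrixP => r; move/negbFE: (all0 r) => /eqP ->; rewrite row0.
  set u := row r (kermx S^T) in nz.
  have uS : u *m S^T = 0 by rewrite /u -row_mul mulmx_ker row0.
  have X0 : (vec_mx u)^T = 0.
    apply: iL => s sz.
    pose t : W := Tuple (introT eqP sz).
    have -> : s = wd (enum_rank t) by rewrite /wd enum_rankK.
    rewrite -dotE.
    transitivity ((u *m S^T) 0 (enum_rank t : 'I_#|{:W}|)); last first.
      by rewrite uS mxE.
    by rewrite mxE; apply: eq_bigr => j _; rewrite !mxE.
  by move: nz; rewrite -vec_mx_eq0 -trmx_eq0 X0 eqxx.
have : (mxvec Y <= S)%MS by rewrite submx_full.
case/submxP => c Hc; exists (fun k => c 0 k).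
apply: (can_inj mxvecK); rewrite Hc mulmx_sum_row linear_sum.
apply: eq_bigr => k _; rewrite linearZ /=; congr (_ *: _).
by apply/rowP => j; rewrite !mxE.
Qed.

End Span.

End Helpers.

Lemma comm_scalar (F : fieldType) (D : nat) (X : 'M[F]_D) :
  (forall Y : 'M[F]_D, Y *m X = X *m Y) -> exists lam, X = lam%:M.
Proof.
case: D X => [|D] X H; first by exists 0; apply/matrixP => [[]].
exists (X 0 0); apply/matrixP => i j; rewrite mxE.
move/matrixP/(_ i 0): (H (delta_mx j 0)); rewrite !mxE.
rewrite (bigD1 0) //= big1 => [|k /negPf k0]; last by rewrite mxE k0 andbF mul0r.
rewrite (bigD1 j) //= big1 => [|k /negPf kj]; last by rewrite mxE kj mulr0.
rewrite !mxE !eqxx !andbT !addr0 mulr1 => <-.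
by case: (i == j); rewrite ?mul1r ?mul0r.
Qed.

Lemma drop_cat_le T n (s1 s2 : seq T) : (n <= size s1)%N ->
  drop n (s1 ++ s2) = drop n s1 ++ s2.
Proof.
move=> le; rewrite -{1}(cat_take_drop n s1) -catA drop_size_cat //.
by rewrite size_takel.
Qed.

Lemma main (F : fieldType) d D n (A : 'I_d -> 'M[F]_D)
  (Dt : n.-tuple 'I_d -> 'M[F]_D) :
  mps_injective A ->
  (forall i : n.+1.-tuple 'I_d,
     A (tnth i ord0) *m Dt (tlast i) = Dt (tfirst i) *m A (tnth i ord_max)) ->
  exists lam, forall t, Dt t = lam *: mxprod A t.
Proof.
move=> inj hrel.
set P := mxprod A.
have [M M0 iM] := injS_of inj.
set L := (n.+1 * M)%N.
have iL : injS A L by apply: injS_mul.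
have nL : (n <= L)%N by rewrite /L; apply: leq_trans (leq_pmulr _ M0); rewrite leqnSn.
pose Dl (s : seq 'I_d) : 'M[F]_D :=
  if (insub s : option (n.-tuple 'I_d)) is Some t then Dt t else 0.
have DlE t : Dl (val t) = Dt t by rewrite /Dl valK.
have rel a w : size w = n -> A a *m Dl w = Dl (belast a w) *m A (last a w).
  move=> sw.
  have sz : size (a :: w) == n.+1 by rewrite /= sw.
  have := hrel (Tuple sz).
  rewrite -!DlE val_tlast val_tfirst /=.
  rewrite (tnth_nth a) /= (tnth_nth a) /=.
  have -> : take n (a :: w) = belast a w.
    by rewrite lastI -cats1 take_size_cat // size_belast.
  by rewrite (last_nth a) sw.
have shift u s : size s = n ->
    P u *m Dl s = Dl (take n (u ++ s)) *m P (drop n (u ++ s)).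
  move=> ss; elim: u => [|a u IH] /=.
    by rewrite mul1mx take_oversize ?ss // drop_oversize ?ss // mulmx1.
  rewrite -mulmxA IH mulmxA rel; last by rewrite size_takel // size_cat ss leq_addl.
  set s' := take n (u ++ s); set r' := drop n (u ++ s).
  have sn : size s' = n by rewrite size_takel // size_cat ss leq_addl.
  have -> : a :: u ++ s = belast a s' ++ (last a s' :: r').
    by rewrite -cat_rcons -lastI /= /s' /r' cat_take_drop.
  rewrite take_size_cat ?size_belast // drop_size_cat ?size_belast //.
  by rewrite -mulmxA.
have wdn k : (n <= size (@wd d L k))%N by rewrite size_wd.
have [c1 Hc1] := span_all iL (1%:M).
pose X := \sum_k c1 k *: (Dl (take n (wd k)) *m P (drop n (wd k))).
have XP t : size t = n -> X *m P t = Dl t.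
  move=> st; rewrite /X mulmx_suml.
  transitivity (\sum_k c1 k *: P (wd k) *m Dl t); last first.
    by rewrite -mulmx_suml -Hc1 mul1mx.
  apply: eq_bigr => k _; rewrite -scalemxAl -scalemxAl; congr (_ *: _).
  rewrite shift // takel_cat // drop_cat_le // -mulmxA.
  by rewrite /P mxprod_cat.
have PX t : size t = n -> P t *m X = Dl t.
  move=> st; rewrite /X mulmx_sumr.
  transitivity (Dl t *m \sum_k c1 k *: P (wd k)); last first.
    by rewrite -Hc1 mulmx1.
  rewrite mulmx_sumr; apply: eq_bigr => k _; rewrite -!scalemxAr; congr (_ *: _).
  rewrite mulmxA shift ?size_takel //.
  rewrite take_size_cat // drop_size_cat // -mulmxA /P -mxprod_cat.
  by rewrite cat_take_drop.
have comm a : A a *m X = X *m A a.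
  apply/eqP; rewrite -subr_eq0; apply/eqP.
  set Z := _ - _.
  have ZP t : size t = n -> Z *m P t = 0.
    move=> st; rewrite /Z mulmxBl -mulmxA XP // rel //.
    rewrite -XP ?size_belast // -!mulmxA.
    have -> : P (belast a t) *m A (last a t) = A a *m P t.
      by rewrite -[A (last a t)]mulmx1 /P -[_ *m 1%:M]/(mxprod A [:: last a t]) -mxprod_cat cats1 -lastI.
    by rewrite subrr.
  rewrite -[Z]mulmx1 Hc1 mulmx_sumr big1 // => k _.
  rewrite -scalemxAr -(cat_take_drop n (wd k)) /P mxprod_cat mulmxA.
  by rewrite ZP ?size_takel // mul0mx scaler0.
have commP s : P s *m X = X *m P s.
  elim: s => [|a s IH] /=; first by rewrite mul1mx mulmx1.
  by rewrite -mulmxA IH mulmxA comm mulmxA.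
have commAll Y : Y *m X = X *m Y.
  have [c Hc] := span_all iL Y.
  rewrite Hc mulmx_suml mulmx_sumr; apply: eq_bigr => k _.
  by rewrite -scalemxAl -scalemxAr commP.
have [lam Xl] := comm_scalar commAll.
exists lam => t; rewrite -DlE -XP ?size_tuple // Xl mul_scalar_mx //.
Qed.

Theorem theorem2 (R : realType) (d D n : nat)
  (A : 'I_d -> 'M[R[i]]_D)
  (o : n.+1.-tuple 'I_d -> n.+1.-tuple 'I_d -> R[i]) (eps : R[i])
  (B Bt : n.-tuple 'I_d -> 'M[R[i]]_D) :
  mps_injective A ->
  solves_eq A o eps B ->
  solves_eq A o eps Bt ->
  exists lam : R[i], forall t : n.-tuple 'I_d,
    Bt t = B t + lam *: mxprod A t.
Proof.
move=> inj hB hBt.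
have hrel : forall i : n.+1.-tuple 'I_d,
  A (tnth i ord0) *m (Bt (tlast i) - B (tlast i)) =
  (Bt (tfirst i) - B (tfirst i)) *m A (tnth i ord_max).
  move=> i; have := hBt i; rewrite hB.
  rewrite mulmxBr mulmxBl; set a := A _ *m B _; set b := B _ *m _.
  set a' := A _ *m Bt _; set b' := Bt _ *m _.
  move=> E; apply/eqP; have -> : a' = a - b + b' by rewrite E subrK.
  by rewrite addrC !addrA addNr add0r addrC.

have [lam Hl] := @main _ d D n A (fun t => Bt t - B t) inj hrel.
by exists lam => t; rewrite -Hl addrC subrK.
Qed.
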